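(* Let $k\geq 2$, let $\mathbb Z_0=\mathbb Z\setminus\{0\}$, and let $z=\{z_j\}_{j\in\mathbb Z_0}$ be positive numbers such that $\sum_{j\in\mathbb Z_0}z_j$ converges with sum $A\neq\frac{1}{k-1}$. Then there exists a number $B>0$, $B\neq A$, satisfying $A(1+B)^k=B(1+A)^k$, which is the sum of a unique convergent series $\sum_{j\in\mathbb Z_0}\tilde z_j$ with $\tilde z\neq z$, and there is a unique sequence of positive parameters $\{\lambda_j\}_{j\in\mathbb Z_0}$, such that both $(z,\tilde z)$ and $(\tilde z,z)$ are solutions of the system $$u_i=\lambda_i\Bigl(\frac{1}{1+\sum_{j\in\mathbb Z_0}v_j}\Bigr)^{k},\qquad v_i=\lambda_i\Bigl(\frac{1}{1+\sum_{j\in\mathbb Z_0}u_j}\Bigr)^{k},\qquad i\in\mathbb Z_0,$$ in the unknowns $(u,v)$, where $\tilde z=\{\tilde z_j\}_{j\in\mathbb Z_0}$. *)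

(* Defs.v *)
From Stdlib Require Import Reals ZArith.
From Coquelicot Require Import Coquelicot.
Open Scope R_scope.

(* A sequence indexed by Z_0 = Z \ {0} is represented by u : Z -> R,
   whose value at 0 is irrelevant (never used). *)

Definition Z0_series (u : Z -> R) (s : R) : Prop :=
  exists s1 s2,
    is_series (fun n : nat => u (Z.of_nat (S n))) s1 /\
    is_series (fun n : nat => u (- Z.of_nat (S n))%Z) s2 /\
    s = s1 + s2.

Definition solves_system (k : nat) (lam u v : Z -> R) : Prop :=
  exists su sv,
    Z0_series u su /\ Z0_series v sv /\
    forall i : Z, i <> 0%Z ->
      u i = lam i * (1 / (1 + sv)) ^ k /\
      v i = lam i * (1 / (1 + su)) ^ k.

(* Main.v *)
Require Import Defs.
From Stdlib Require Import Reals ZArith Lra Lia.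
From Coquelicot Require Import Coquelicot.
Open Scope R_scope.
Lemma series_pos (a : nat -> R) l : is_series a l -> (forall n, 0 < a n) -> 0 < l.
Proof.
  intros H Hp.
  assert (Hl : is_lim_seq (sum_n a) l) by exact H.
  assert (sum_n a 0 <= l).
  { apply (is_lim_seq_incr_compare _ _ Hl). intros n. rewrite sum_Sn.
    pose proof (Hp (S n)). unfold plus; simpl. lra. }
  rewrite sum_O in H0. pose proof (Hp 0%nat). lra.
Qed.
Lemma sum_cont n : continuity (fun s => sum_f_R0 (fun i => s ^ i) n).
Proof.
  induction n; simpl.
  - apply continuity_const. intros ?; reflexivity.
  - apply continuity_plus; auto. apply derivable_continuous, (derivable_pow (S n)).
Qed.
Lemma sum_zero n : sum_f_R0 (fun i => 0 ^ i) n = 1.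
Proof. induction n; simpl; [lra|]. rewrite IHn. lra. Qed.
Lemma sum_one n : sum_f_R0 (fun i => 1 ^ i) n = INR (S n).
Proof. induction n; simpl sum_f_R0. simpl; lra. rewrite IHn, pow1, (S_INR (S n)). lra. Qed.
Lemma sum_ge x n : 0 <= x -> (1 <= n)%nat -> 1 + x <= sum_f_R0 (fun i => x ^ i) n.
Proof.
  intros Hx Hn. induction Hn; simpl. lra.
  pose proof (pow_le x (S m) Hx). simpl in H. lra.
Qed.
Lemma powinv1 x k : x <> 0 -> x ^ k * (1 / x) ^ k = 1.
Proof. intros H. rewrite <- Rpow_mult_distr. replace (x * (1/x)) with 1 by (field; auto). apply pow1. Qed.
Lemma Z0_unique u a b : Z0_series u a -> Z0_series u b -> a = b.
Proof.
  intros [a1 [a2 [H1 [H2 ->]]]] [b1 [b2 [G1 [G2 ->]]]].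
  apply is_series_unique in H1, H2, G1, G2. congruence.
Qed.

Theorem mainTheorem5 (k : nat) (z : Z -> R) (A : R) :
  (2 <= k)%nat ->
  (forall j : Z, j <> 0%Z -> 0 < z j) ->
  Z0_series z A ->
  A <> 1 / (INR k - 1) ->
  exists B : R,
    0 < B /\ B <> A /\ A * (1 + B) ^ k = B * (1 + A) ^ k /\
    exists zt lam : Z -> R,
      ( Z0_series zt B /\
        (exists j : Z, j <> 0%Z /\ zt j <> z j) /\
        (forall j : Z, j <> 0%Z -> 0 < lam j) /\
        solves_system k lam z zt /\ solves_system k lam zt z ) /\
      (forall zt' lam' : Z -> R,
        Z0_series zt' B ->
        (exists j : Z, j <> 0%Z /\ zt' j <> z j) ->
        (forall j : Z, j <> 0%Z -> 0 < lam' j) ->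
        solves_system k lam' z zt' -> solves_system k lam' zt' z ->
        forall j : Z, j <> 0%Z -> zt' j = zt j /\ lam' j = lam j).
Proof.
  intros Hk Hz HzA HA1.
  pose proof HzA as [s1 [s2 [H1 [H2 HA]]]].
  assert (Hs1 : 0 < s1).
  { apply (series_pos _ _ H1). intros n. apply Hz. lia. }
  assert (Hs2 : 0 < s2).
  { apply (series_pos _ _ H2). intros n. apply Hz. lia. }
  assert (Apos : 0 < A) by lra.
  destruct k as [|n]; [lia|].
  assert (Hn : (1 <= n)%nat) by lia.
  set (psi := fun s => A * (sum_f_R0 (fun i => s ^ i) n - 1) - 1).
  assert (Hc : continuity psi).
  { unfold psi. apply continuity_minus; [|apply continuity_const; intros ?; reflexivity].
    apply continuity_scal. apply continuity_minus; [apply sum_cont|apply continuity_const; intros ?; reflexivity]. }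
  assert (Hp0 : psi 0 < 0). { unfold psi. rewrite sum_zero. lra. }
  assert (HpM : 0 < psi (1 / A + 1)).
  { unfold psi. assert (0 < 1/A) by (apply Rdiv_lt_0_compat; lra).
    pose proof (sum_ge (1/A+1) n ltac:(lra) Hn).
    assert (A * (1/A) = 1) by (field; lra). nra. }
  destruct (IVT psi 0 (1/A+1) Hc ltac:(assert (0 < 1/A) by (apply Rdiv_lt_0_compat; lra); lra) Hp0 HpM)
    as [s0 [[Hs0a Hs0b] Hs0]].
  assert (s0pos : 0 < s0).
  { destruct Hs0a as [|<-]; auto. lra. }
  set (S0 := sum_f_R0 (fun i => s0 ^ i) n) in *.
  assert (HAS : A * S0 = 1 + A) by (unfold psi in Hs0; fold S0 in Hs0; lra).
  pose proof (GP_finite s0 n) as HG. fold S0 in HG. rewrite Nat.add_1_r in HG.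
  assert (s0ne1 : s0 <> 1).
  { intros E. subst S0. rewrite E, sum_one in HAS.
    apply HA1. assert (INR (S n) >= 2). { replace 2 with (INR 2) by (simpl; lra). apply Rle_ge, le_INR. lia. }
    field_simplify_eq; [|lra]. lra. }
  set (B := A * s0 ^ S n).
  assert (HB : B = (1 + A) * s0 - 1).
  { unfold B. replace (s0 ^ S n) with (S0 * (s0 - 1) + 1) by lra.
    replace (A * (S0 * (s0 - 1) + 1)) with ((A * S0) * (s0 - 1) + A) by ring. rewrite HAS. ring. }
  assert (Bpos : 0 < B) by (unfold B; apply Rmult_lt_0_compat; [lra| apply pow_lt; lra]).
  assert (BneA : B <> A).
  { intros E. apply s0ne1. rewrite HB in E. nra. }
  assert (Heq : A * (1 + B) ^ S n = B * (1 + A) ^ S n).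
  { replace (1 + B) with ((1 + A) * s0) by lra. rewrite Rpow_mult_distr. unfold B. ring. }
  exists B. split; [lra|]. split; [auto|]. split; [auto|].
  set (c := (1 + B) ^ S n * (1 / (1 + A)) ^ S n).
  assert (HcA : c * A = B).
  { unfold c. replace ((1 + B) ^ S n * (1 / (1 + A)) ^ S n * A) with
      ((A * (1 + B) ^ S n) * (1 / (1 + A)) ^ S n) by ring.
    rewrite Heq, Rmult_assoc, powinv1; lra. }
  set (lam := fun j => z j * (1 + B) ^ S n).
  set (zt := fun j => z j * c).
  assert (Hzt : Z0_series zt B).
  { exists (s1 * c), (s2 * c). split; [|split].
    - apply (is_series_scal_r c _ _ H1).
    - apply (is_series_scal_r c _ _ H2).
    - rewrite <- HcA, HA. ring. }
  assert (Hsys1 : solves_system (S n) lam z zt).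
  { exists A, B. split; [auto|]. split; [auto|]. intros i Hi. unfold lam, zt, c. split.
    - rewrite Rmult_assoc, powinv1; lra.
    - ring. }
  assert (Hsys2 : solves_system (S n) lam zt z).
  { exists B, A. split; [auto|]. split; [auto|]. intros i Hi. unfold lam, zt, c. split.
    - ring.
    - rewrite Rmult_assoc, powinv1; lra. }
  exists zt, lam. split.
  - split; [auto|]. split.
    + exists 1%Z. split; [lia|]. unfold zt. intros E.
      pose proof (Hz 1%Z ltac:(lia)).
      assert (c = 1) by (apply (Rmult_eq_reg_l (z 1%Z)); lra).
      apply BneA. rewrite <- HcA. rewrite H0. ring.
    + split; [|split; auto]. intros j Hj. unfold lam.
      apply Rmult_lt_0_compat; [auto|apply pow_lt; lra].
  - intros zt' lam' Hzt' _ _ [su [sv [Hsu [Hsv Hi]]]] _ j Hj.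
    pose proof (Z0_unique _ _ _ Hsu HzA) as ->.
    pose proof (Z0_unique _ _ _ Hsv Hzt') as ->.
    destruct (Hi j Hj) as [E1 E2].
    assert (Hl : lam' j = lam j).
    { unfold lam. rewrite E1, Rmult_assoc.
      rewrite (Rmult_comm ((1 / (1 + B)) ^ S n)), powinv1; lra. }
    split; auto. rewrite E2, Hl. unfold lam, zt, c. ring.
Qed.
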